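(* Let $\mathfrak{g}$ be a semi-simple real Lie algebra with a faithful finite dimensional real representation $\mathfrak{g}\to\mathrm{End}(W)$, and suppose there is a symmetric bilinear $\mathfrak{g}$-equivariant map $\wedge:W\times W\to W^*$ which does not vanish identically on any $2$-dimensional linear subspace of $W$. Then $\mathfrak{g}$ does not contain any subalgebra isomorphic to $\mathfrak{sl}_2(\mathbf{R})\oplus\mathfrak{sl}_2(\mathbf{R})$.
   Context: $W^*$ is the dual representation; equivariance of $\wedge$ means $X\cdot(a\wedge b)=(X\cdot a)\wedge b+a\wedge(X\cdot b)$ for $X\in\mathfrak{g}$. *)

(* Defs.v *)
From HB Require Import structures.
From mathcomp Require Import all_boot all_order all_algebra.
Set Implicit Arguments. Unset Strict Implicit. Unset Printing Implicit Defensive.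
Import Order.TTheory GRing.Theory Num.Theory.
Local Open Scope ring_scope.

Definition lie_bracket (K : fieldType) (V : vectType K) (br : V -> V -> V) : Prop :=
  [/\ (forall (a : K) (x y z : V), br (a *: x + y) z = a *: br x z + br y z),
      (forall (a : K) (x y z : V), br z (a *: x + y) = a *: br z x + br z y),
      (forall x : V, br x x = 0) &
      (forall x y z : V, br x (br y z) + br y (br z x) + br z (br x y) = 0)].

(* [U, U'] : the span of all brackets [u, u'] with u in U, u' in U'
   (by bilinearity, spanned by the brackets of basis vectors). *)
Definition brv (K : fieldType) (V : vectType K) (br : V -> V -> V)
    (U U' : {vspace V}) : {vspace V} :=
  (<<[seq br u u' | u <- vbasis U, u' <- vbasis U']>>)%VS.

Definition lie_ideal (K : fieldType) (V : vectType K) (br : V -> V -> V)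
    (I : {vspace V}) : Prop :=
  (brv br fullv I <= I)%VS.

Definition derived (K : fieldType) (V : vectType K) (br : V -> V -> V)
    (k : nat) (I : {vspace V}) : {vspace V} :=
  iter k (fun U => brv br U U) I.

Definition lie_solvable (K : fieldType) (V : vectType K) (br : V -> V -> V)
    (I : {vspace V}) : Prop :=
  exists k, derived br k I = 0%VS.

Definition lie_semisimple (K : fieldType) (V : vectType K) (br : V -> V -> V) : Prop :=
  forall I : {vspace V}, lie_ideal br I -> lie_solvable br I -> I = 0%VS.

Definition lie_rep (K : fieldType) (V : vectType K) (br : V -> V -> V) (n : nat)
    (rho : V -> 'M[K]_n) : Prop :=
  [/\ (forall (a : K) (x y : V), rho (a *: x + y) = a *: rho x + rho y) &
      (forall x y : V, rho (br x y) = rho x *m rho y - rho y *m rho x)].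

Definition faithful (K : fieldType) (V : vectType K) (n : nat)
    (rho : V -> 'M[K]_n) : Prop := injective rho.

(* W^* is represented by row vectors 'rV_n, paired with W via f *m w;
   the dual action is X . f = - f *m rho X (so that (X.f)(w) = - f(X.w)). *)
Definition dual_act (K : fieldType) (n : nat) (M : 'M[K]_n) (f : 'rV[K]_n) : 'rV[K]_n :=
  - (f *m M).

Definition sym_equiv_wedge (K : fieldType) (V : vectType K) (n : nat)
    (rho : V -> 'M[K]_n) (wedge : 'cV[K]_n -> 'cV[K]_n -> 'rV[K]_n) : Prop :=
  [/\ (forall (c : K) (a a' b : 'cV[K]_n), wedge (c *: a + a') b = c *: wedge a b + wedge a' b),
      (forall a b : 'cV[K]_n, wedge a b = wedge b a) &
      (forall (X : V) (a b : 'cV[K]_n),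
         dual_act (rho X) (wedge a b) = wedge (rho X *m a) b + wedge a (rho X *m b))].

Definition nonvanishing_on_planes (K : fieldType) (n : nat)
    (wedge : 'cV[K]_n -> 'cV[K]_n -> 'rV[K]_n) : Prop :=
  forall U : {vspace 'cV[K]_n}, \dim U = 2%N ->
    exists a b, [/\ a \in U, b \in U & wedge a b != 0].

Definition sl2 (K : fieldType) (A : 'M[K]_2) : bool := \tr A == 0.

Definition mxcomm (K : fieldType) (A B : 'M[K]_2) : 'M[K]_2 := A *m B - B *m A.

(* (A, C) |-> phi1 A + phi2 C is an injective Lie algebra homomorphism
   sl_2(K) (+) sl_2(K) -> V, i.e. its image is a subalgebra of V isomorphic
   to sl_2(K) (+) sl_2(K). *)
Definition sl2sl2_embedding (K : fieldType) (V : vectType K) (br : V -> V -> V)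
    (phi1 phi2 : 'M[K]_2 -> V) : Prop :=
  [/\ (forall (a : K) (A B : 'M[K]_2), phi1 (a *: A + B) = a *: phi1 A + phi1 B),
      (forall (a : K) (A B : 'M[K]_2), phi2 (a *: A + B) = a *: phi2 A + phi2 B),
      (forall A B C D : 'M[K]_2, sl2 A -> sl2 B -> sl2 C -> sl2 D ->
         phi1 (mxcomm A B) + phi2 (mxcomm C D) = br (phi1 A + phi2 C) (phi1 B + phi2 D)) &
      (forall A C : 'M[K]_2, sl2 A -> sl2 C -> phi1 A + phi2 C = 0 -> A = 0 /\ C = 0)].

Definition has_sl2sl2_subalgebra (K : fieldType) (V : vectType K) (br : V -> V -> V) : Prop :=
  exists phi1 phi2 : 'M[K]_2 -> V, sl2sl2_embedding br phi1 phi2.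

(* Main.v *)
Require Import Defs.
From HB Require Import structures.
From mathcomp Require Import all_boot all_order all_algebra.
From Stdlib Require Import Lia.
Import Order.TTheory GRing.Theory Num.Theory.
Set Implicit Arguments. Unset Strict Implicit. Unset Printing Implicit Defensive.
Local Open Scope ring_scope.

Definition trip (R : numFieldType) (n : nat) (e h f : 'M[R]_n.+1) :=
  [/\ h*e - e*h = 2%:R *: e, h*f - f*h = -(2%:R *: f) & e*f - f*e = h].

Lemma trip_hf (R : numFieldType) (n : nat) (e h f : 'M[R]_n.+1) :
  trip e h f -> h * f = f * h - 2%:R *: f.
Proof. by case=> _ H2 _; rewrite -(subrK (f*h) (h*f)) H2 addrC. Qed.

Lemma trip_he (R : numFieldType) (n : nat) (e h f : 'M[R]_n.+1) :
  trip e h f -> h * e = e * h + 2%:R *: e.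
Proof. by case=> H1 _ _; rewrite -H1 addrC subrK. Qed.

Lemma trip_ef (R : numFieldType) (n : nat) (e h f : 'M[R]_n.+1) :
  trip e h f -> e * f = f * e + h.
Proof. by case=> _ _ H3; rewrite -H3 addrC subrK. Qed.

Lemma trip_hfX (R : numFieldType) (n : nat) (e h f : 'M[R]_n.+1) k :
  trip e h f -> h * f ^+ k = f ^+ k * h - (2 * k)%:R *: f ^+ k.
Proof.
move=> T; elim: k => [|k IH]; first by rewrite !expr0 mulr1 mul1r muln0 scale0r subr0.
rewrite exprSr mulrA IH mulrBl -!scalerAl -[f^+k * h * f]mulrA (trip_hf T) mulrBr -scalerAr mulrA.
by rewrite mulnS natrD [in RHS]scalerDl opprD addrA.
Qed.

Lemma trip_efX (R : numFieldType) (n : nat) (e h f : 'M[R]_n.+1) k :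
  trip e h f ->
  e * f ^+ k.+1 = f ^+ k.+1 * e + k.+1%:R *: (f ^+ k * h) - (k * k.+1)%:R *: f ^+ k.
Proof.
move=> T; elim: k => [|k IH].
  by rewrite expr1 expr0 mul1r mul0n scale0r subr0 scale1r (trip_ef T).
rewrite (exprSr f k.+1) mulrA IH !mulrBl !mulrDl -!scalerAl -!mulrA (trip_ef T) (trip_hf T).
rewrite mulrDr mulrBr -scalerAr !mulrA -!exprSr.
rewrite scalerBr scalerA -!addrA; congr (_ + _).
rewrite addrA -{1}[f ^+ k.+1 * h]scale1r -scalerDl -mulrS; congr (_ + _).
rewrite -opprD -scalerDl -!natrM -natrD; congr (- (_%:R *: _)).
by rewrite -!multE -!plusE; nia.
Qed.

Lemma trip_opp (R : numFieldType) (n : nat) (e h f : 'M[R]_n.+1) :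
  trip e h f -> trip f (-h) e.
Proof.
case=> H1 H2 H3; split.
- by rewrite mulNr mulrN opprK addrC -opprB H2 opprK.
- by rewrite mulNr mulrN opprK addrC -opprB H1.
- by rewrite -opprB H3.
Qed.

Lemma trmx_mulr (R : numFieldType) (n : nat) (A B : 'M[R]_n.+1) :
  (A * B)^T = B^T * A^T.
Proof. by rewrite -!mulmxE trmx_mul. Qed.

Lemma trip_tr (R : numFieldType) (n : nat) (e h f : 'M[R]_n.+1) :
  trip e h f -> trip f^T h^T e^T.
Proof.
case=> H1 H2 H3; split.
- by rewrite -!trmx_mulr -linearB /= -opprB H2 opprK linearZ.
- by rewrite -!trmx_mulr -linearB /= -opprB H1 linearN linearZ.
- by rewrite -!trmx_mulr -linearB /= H3.
Qed.

Lemma trip_top (R : numFieldType) (n : nat) (e h f : 'M[R]_n.+1) d :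
  trip e h f -> f ^+ d.+1 = 0 -> h * f ^+ d = - (d%:R *: f ^+ d).
Proof.
move=> T F0.
have E1 : f ^+ d * h = d%:R *: f ^+ d.
  have := trip_efX d T; rewrite F0 mulr0 mul0r add0r => /eqP.
  rewrite eq_sym subr_eq0 natrM mulrC -scalerA => /eqP.
  by apply: scalerI; rewrite pnatr_eq0.
rewrite (trip_hfX _ T) E1 mulnC natrM -scalerA.
by rewrite scalerA mulrC -scalerA (scaler_nat 2) mulr2n opprD addrA subrr add0r.
Qed.

Lemma mulmxRA (R : numFieldType) (n m : nat) (A B : 'M[R]_n.+1) (u : 'M[R]_(n.+1, m)) :
  (A * B) *m u = A *m (B *m u).
Proof. by rewrite -mulmxE mulmxA. Qed.

Lemma mul1mxR (R : numFieldType) (n m : nat) (u : 'M[R]_(n.+1, m)) :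
  (1 : 'M[R]_n.+1) *m u = u.
Proof. exact: mul1mx. Qed.

Lemma trip_hw (R : numFieldType) (n : nat) (e h f : 'M[R]_n.+1) N
    (u : 'cV[R]_n.+1) (mu : R) :
  trip e h f -> f ^+ N = 0 -> u != 0 -> e *m u = 0 -> h *m u = mu *: u ->
  exists2 k, (k < N)%N & mu = k%:R.
Proof.
move=> T FN u0 eu hu.
have exP : exists j, (fun j => f ^+ j *m u == 0) j by exists N; rewrite FN mul0mx.
case: (ex_minnP exP) => j /eqP Pj minj.
case: j Pj minj => [|k] Pj minj; first by rewrite expr0 mul1mxR in Pj; rewrite Pj eqxx in u0.
have Pk : f ^+ k *m u != 0.
  by apply/negP => /minj; rewrite ltnn.
exists k; first by apply: minj; rewrite FN mul0mx.
have := congr1 (fun M => M *m u) (trip_efX k T) => /=.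
rewrite mulmxRA Pj mulmx0 mulmxBl mulmxDl mulmxRA eu mulmx0 add0r.
rewrite -!scalemxAl mulmxRA hu -scalemxAr scalerA -scalerBl => /esym/eqP.
rewrite scaler_eq0 (negbTE Pk) orbF (mulnC k) natrM -mulrBr mulf_eq0 pnatr_eq0 /= subr_eq0.
by move/eqP.
Qed.

Lemma mx0P (R : numFieldType) (m n : nat) (A : 'M[R]_(m, n)) :
  (forall v : 'cV[R]_n, A *m v = 0) -> A = 0.
Proof.
move=> H; apply/matrixP => i j.
move/matrixP/(_ i 0): (H (delta_mx j 0)).
by rewrite -colE !mxE.
Qed.

Lemma mx_neq0 (R : numFieldType) (m n : nat) (A : 'M[R]_(m, n)) :
  A != 0 -> exists v : 'cV[R]_n, A *m v != 0.
Proof.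
move=> A0; case: (boolP [exists j : 'I_n, A *m (delta_mx j (0 : 'I_1) : 'cV[R]_n) != 0]).
  by case/existsP => j Hj; exists (delta_mx j 0).
rewrite negb_exists => /forallP H.
suff A00 : A = 0 by rewrite A00 eqxx in A0.
apply/matrixP => i j.
move: (H j); rewrite negbK => /eqP/matrixP/(_ i 0).
by rewrite -colE !mxE.
Qed.

Lemma trip_le (R : numFieldType) (n : nat) (e h f : 'M[R]_n.+1) m N :
  trip e h f -> e ^+ m.+1 = 0 -> e ^+ m != 0 -> f ^+ N = 0 -> (m < N)%N.
Proof.
move=> T Em Em0 FN.
have Ht := trip_top (trip_opp T) Em.
have hE : h * e ^+ m = m%:R *: e ^+ m by rewrite -[h]opprK mulNr Ht opprK.
case: (mx_neq0 Em0) => v Hv.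
have eu : e *m (e ^+ m *m v) = 0 by rewrite -mulmxRA -exprS Em mul0mx.
have hu : h *m (e ^+ m *m v) = m%:R *: (e ^+ m *m v) by rewrite -mulmxRA hE scalemxAl.
have [k Hk Hmk] := trip_hw T FN Hv eu hu.
by move/eqP: Hmk; rewrite eqr_nat => /eqP ->.
Qed.

Lemma ad_pow (R : numFieldType) (n : nat) (e h : 'M[R]_n.+1) :
  h * e - e * h = 2%:R *: e -> forall k, h * e ^+ k - e ^+ k * h = (2 * k)%:R *: e ^+ k.
Proof.
move=> H k; elim: k => [|k IH]; first by rewrite expr0 mulr1 mul1r subrr muln0 scale0r.
have E : h * (e ^+ k * e) - e ^+ k * e * h =
    (h * e ^+ k - e ^+ k * h) * e + e ^+ k * (h * e - e * h).
  by rewrite mulrBl mulrBr !mulrA addrA subrK.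
rewrite exprSr E IH H -scalerAl -scalerAr -exprSr -scalerDl -natrD mulnS addnC.
by [].
Qed.

Lemma horner_mx_sum (R : numFieldType) (n : nat) (e : 'M[R]_n.+1) (m : nat) (c : nat -> R) :
  horner_mx e (\poly_(i < m) c i) = \sum_(i < m) c i *: e ^+ i.
Proof.
rewrite poly_def rmorph_sum /=; apply: eq_bigr => i _.
by rewrite horner_mxZ rmorphXn /= horner_mx_X.
Qed.

Lemma nilp (R : numFieldType) (n : nat) (e h : 'M[R]_n.+1) :
  h * e - e * h = 2%:R *: e -> exists N, e ^+ N = 0.
Proof.
move=> H; set p := mxminpoly e; set d := degree_mxminpoly e.
have sp : size p = d.+1 by rewrite size_mxminpoly.
have hp : horner_mx e p = 0 by apply: mx_root_minpoly.
have pE : horner_mx e p = \sum_(i < d.+1) p`_i *: e ^+ i.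
  by rewrite -{1}(coefK p) sp horner_mx_sum.
set q := \poly_(i < d.+1) (i%:R * p`_i).
have hq : horner_mx e q = 0.
  have : h * horner_mx e p - horner_mx e p * h = 2%:R *: horner_mx e q.
    rewrite pE horner_mx_sum mulr_sumr mulr_suml -sumrB scaler_sumr.
    apply: eq_bigr => i _; rewrite -scalerAr -scalerAl -scalerBr ad_pow //.
    by rewrite !scalerA natrM mulrCA [p`_i * _]mulrC.
  move=> E; move: E; rewrite hp mulr0 mul0r subrr => /esym/eqP.
  by rewrite scaler_eq0 pnatr_eq0 /= => /eqP.
set r := d%:R *: p - q.
have hr : horner_mx e r = 0 by rewrite raddfB /= horner_mxZ hp hq scaler0 subrr.
have r0 : r = 0.
  apply/eqP; apply: contraT => rn0.
  suff sr : (size r <= d)%N.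
    have := dvdp_leq rn0 (mxminpoly_min hr); rewrite sp => H1.
    by have := leq_trans H1 sr; rewrite ltnn.
  apply/leq_sizeP => j Hj; rewrite /r coefB coefZ coef_poly.
  case: ltnP => Hjd.
    have -> : j = d by apply/eqP; rewrite eqn_leq Hj -ltnS Hjd.
    by rewrite mulrC subrr.
  have -> : p`_j = 0 by apply/leq_sizeP: Hjd; rewrite sp.
  by rewrite mulr0 subrr.
have pi0 : forall i, (i < d)%N -> p`_i = 0.
  move=> i Hi; have := congr1 (fun s : {poly R} => s`_i) r0.
  rewrite /r coefB coefZ coef_poly coef0 ltnS ltnW // -mulrBl => /eqP.
  rewrite mulf_eq0 subr_eq0 eqr_nat => /orP [/eqP Hdi|/eqP //].
  by rewrite Hdi ltnn in Hi.
exists d; rewrite -hp pE big_ord_recr /= big1 ?add0r.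
  have : p \is monic by apply: mxminpoly_monic.
  by move/monicP; rewrite /lead_coef sp /= => ->; rewrite scale1r.
by move=> i _; rewrite pi0 ?scale0r.
Qed.

Definition eqv (R : numFieldType) (n : nat) (wedge : 'cV[R]_n.+1 -> 'cV[R]_n.+1 -> 'rV[R]_n.+1)
  (M : 'M[R]_n.+1) :=
  forall a b, -(wedge a b *m M) = wedge (M *m a) b + wedge a (M *m b).

Definition wbil (R : numFieldType) (n : nat) (wedge : 'cV[R]_n.+1 -> 'cV[R]_n.+1 -> 'rV[R]_n.+1) :=
  (forall (c : R) (a a' b : 'cV[R]_n.+1), wedge (c *: a + a') b = c *: wedge a b + wedge a' b)
  /\ (forall a b : 'cV[R]_n.+1, wedge a b = wedge b a).

Lemma w0l (R : numFieldType) (n : nat) wedge (B : @wbil R n wedge) b : wedge 0 b = 0.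
Proof.
case: B => WL _; have E : wedge 0 b = wedge 0 b + wedge 0 b.
  by rewrite -{1}(addr0 0) -{1}(scale1r 0) WL scale1r.
have : wedge 0 b + wedge 0 b - wedge 0 b = wedge 0 b - wedge 0 b by rewrite -E.
by rewrite addrK subrr.
Qed.

Lemma wDl (R : numFieldType) (n : nat) wedge (B : @wbil R n wedge) a a' b :
  wedge (a + a') b = wedge a b + wedge a' b.
Proof. by case: (B) => WL _; have := WL 1 a a' b; rewrite !scale1r. Qed.

Lemma wZl (R : numFieldType) (n : nat) wedge (B : @wbil R n wedge) c a b :
  wedge (c *: a) b = c *: wedge a b.
Proof. by case: (B) => WL _; rewrite -[c *: a]addr0 WL w0l // addr0. Qed.

Lemma wNl (R : numFieldType) (n : nat) wedge (B : @wbil R n wedge) a b :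
  wedge (- a) b = - wedge a b.
Proof. by rewrite -scaleN1r wZl // scaleN1r. Qed.

Lemma w0r (R : numFieldType) (n : nat) wedge (B : @wbil R n wedge) b : wedge b 0 = 0.
Proof. by case: (B) => _ WS; rewrite WS w0l. Qed.

Lemma wDr (R : numFieldType) (n : nat) wedge (B : @wbil R n wedge) a a' b :
  wedge b (a + a') = wedge b a + wedge b a'.
Proof. by case: (B) => _ WS; rewrite !(WS b) wDl. Qed.

Lemma wZr (R : numFieldType) (n : nat) wedge (B : @wbil R n wedge) c a b :
  wedge b (c *: a) = c *: wedge b a.
Proof. by case: (B) => _ WS; rewrite !(WS b) wZl. Qed.

Lemma wNr (R : numFieldType) (n : nat) wedge (B : @wbil R n wedge) a b :
  wedge b (- a) = - wedge b a.
Proof. by case: (B) => _ WS; rewrite !(WS b) wNl. Qed.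

Lemma eqv_opp (R : numFieldType) (n : nat) wedge (B : @wbil R n wedge) M :
  eqv wedge M -> eqv wedge (- M).
Proof.
move=> E a b; rewrite !mulNmx mulmxN wNl // wNr // -opprD -E //.
Qed.

Lemma mulmx1R (R : numFieldType) (n m : nat) (u : 'M[R]_(m, n.+1)) :
  u *m (1 : 'M[R]_n.+1) = u.
Proof. exact: mulmx1. Qed.

Lemma mulmxRl (R : numFieldType) (n m : nat) (A B : 'M[R]_n.+1) (u : 'M[R]_(m, n.+1)) :
  u *m (A * B) = u *m A *m B.
Proof. exact: mulmxA. Qed.

Lemma wkill (R : numFieldType) (n : nat) wedge (B : @wbil R n wedge) f y :
  eqv wedge f -> f *m y = 0 ->
  forall k x, wedge (f ^+ k *m x) y = (-1) ^+ k *: (wedge x y *m f ^+ k).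
Proof.
move=> Ef fy k; elim: k => [|k IH] x.
  by rewrite !expr0 mul1mxR mulmx1R scale1r.
have Hx : wedge (f *m x) y = -(wedge x y *m f).
  by rewrite Ef fy w0r // addr0.
rewrite [in LHS]exprSr mulmxRA IH Hx mulNmx scalerN exprS mulN1r scaleNr.
by rewrite [in RHS]exprS mulmxRl.
Qed.

Lemma trmxX (R : numFieldType) (n : nat) (A : 'M[R]_n.+1) k : (A ^+ k)^T = A^T ^+ k.
Proof.
elim: k => [|k IH]; first by rewrite !expr0 trmx1.
by rewrite exprS exprSr trmx_mulr IH.
Qed.

Lemma vanish (R : numFieldType) (n : nat) wedge (B : @wbil R n wedge) e h f d :
  trip e h f -> eqv wedge h -> eqv wedge f -> f ^+ d.+1 = 0 -> e ^+ d.+1 = 0 -> (0 < d)%N ->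
  forall v v', wedge (f ^+ d *m v) (f ^+ d *m v') = 0.
Proof.
move=> T Eh Ef Fd Ed d0 v v'.
have hx : forall z : 'cV[R]_n.+1, h *m (f ^+ d *m z) = - (d%:R *: (f ^+ d *m z)).
  by move=> z; rewrite -mulmxRA (trip_top T Fd) mulNmx scalemxAl.
have fx : forall z : 'cV[R]_n.+1, f *m (f ^+ d *m z) = 0.
  by move=> z; rewrite -mulmxRA -exprS Fd mul0mx.
set w := wedge _ _.
have wh : w *m h = (d + d)%:R *: w.
  apply: oppr_inj; rewrite Eh !hx wNl // wNr // wZl // wZr // -opprD -scalerDl -natrD.
  by [].
have wf : w *m f = 0.
  by apply: oppr_inj; rewrite Ef !fx w0l // w0r // addr0 oppr0.
apply/eqP; apply: contraT => w0.
have u0 : w^T != 0 by apply: contra w0 => /eqP u0; rewrite -[w]trmxK u0 linear0.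
have eu : f^T *m w^T = 0 by rewrite -trmx_mul wf linear0.
have hu : h^T *m w^T = (d + d)%:R *: w^T by rewrite -trmx_mul wh linearZ.
have Fe : e^T ^+ d.+1 = 0 by rewrite -trmxX Ed linear0.
have [k Hk /eqP] := trip_hw (trip_tr T) Fe u0 eu hu.
rewrite eqr_nat => /eqP Hdk.
by move: Hk d0; rewrite -Hdk -plusE => /ssrnat.ltP ? /ssrnat.ltP ?; lia.
Qed.

Lemma plane (R : numFieldType) (n : nat) wedge (B : @wbil R n wedge)
  (NV : nonvanishing_on_planes wedge) x y :
  free [:: x; y] -> wedge x x = 0 -> wedge x y = 0 -> wedge y y = 0 -> False.
Proof.
move=> Hf Hxx Hxy Hyy.
have Hd : \dim <<[:: x; y]>>%VS = 2%N by move: Hf; rewrite /free => /eqP.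
have [a [b [Ha Hb Hab]]] := NV _ Hd.
have Hsp : forall z, z \in <<[:: x; y]>>%VS -> exists c c', z = c *: x + c' *: y.
  move=> z; rewrite span_cons span_seq1 => /memv_addP [u /vlineP [c ->]].
  by case=> u' /vlineP [c' ->] ->; exists c, c'.
have [c [c' Ea]] := Hsp _ Ha; have [k [k' Eb]] := Hsp _ Hb.
have Hyx : wedge y x = 0 by case: B => _ WS; rewrite WS.
move: Hab; rewrite Ea Eb !(wDl B, wZl B, wDr B, wZr B) Hxx Hxy Hyx Hyy.
by rewrite !(scaler0, addr0) eqxx.
Qed.

Lemma scal (R : numFieldType) (n : nat) (M P : 'M[R]_n.+1) (a v0 : 'cV[R]_n.+1) N :
  M * P = P * M -> M ^+ N = 0 -> a = P *m v0 -> a != 0 ->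
  (forall v, exists c, P *m v = c *: a) -> M * P = 0.
Proof.
move=> MP MN Ha a0 HP.
have [c Hc] : exists c, M *m a = c *: a.
  by rewrite Ha -mulmxRA MP mulmxRA; have [c ->] := HP (M *m v0); exists c; rewrite -Ha.
have Hk : forall k, M ^+ k *m a = c ^+ k *: a.
  elim=> [|k IH]; first by rewrite !expr0 mul1mxR scale1r.
  by rewrite [M ^+ _]exprS mulmxRA IH -scalemxAr Hc scalerA -exprSr.
have c0 : c = 0.
  have := Hk N; rewrite MN mul0mx => /esym/eqP; rewrite scaler_eq0 (negbTE a0) orbF.
  by rewrite expf_eq0 => /andP [_ /eqP].
apply: mx0P => v; rewrite mulmxRA; have [c' ->] := HP v.
by rewrite -scalemxAr Hc c0 scale0r scaler0.
Qed.

Lemma idx (R : numFieldType) (n : nat) (A : 'M[R]_n.+1) M :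
  A ^+ M = 0 -> A != 0 -> exists d, [/\ (0 < d)%N, A ^+ d.+1 = 0 & A ^+ d != 0].
Proof.
move=> AM A0.
have exP : exists j, (fun j => A ^+ j == 0) j by exists M; rewrite AM.
case: (ex_minnP exP) => j /eqP Pj minj.
case: j Pj minj => [|[|d]] Pj minj.
- by move: A0; rewrite -[A]mulr1 -(expr0 A) Pj mulr0 eqxx.
- by move: A0; rewrite -(expr1 A) Pj eqxx.
exists d.+1; split => //; apply/negP => /minj; rewrite ltnn //.
Qed.

Lemma trip_facts (R : numFieldType) (n : nat) (e h f : 'M[R]_n.+1) :
  trip e h f -> f != 0 ->
  exists d, [/\ (0 < d)%N, f ^+ d.+1 = 0, f ^+ d != 0 & e ^+ d.+1 = 0].
Proof.
move=> T f0.
have [H1 _ _] := trip_opp T; have [M fM] := nilp H1.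
have [d [d0 fd fd0]] := idx fM f0.
exists d; split => //.
have [Me eM] := nilp (let: And3 x _ _ := T in x).
have exP : exists j, (fun j => e ^+ j == 0) j by exists Me; rewrite eM.
case: (ex_minnP exP) => j /eqP Pj minj.
case: j Pj minj => [|m] Pj minj.
  by move: f0; rewrite -[f]mulr1 -(expr0 e) Pj mulr0 eqxx.
have em : e ^+ m != 0 by apply/negP => /minj; rewrite ltnn.
have := trip_le T Pj em fd => Hm.
by rewrite -(subnKC Hm) exprD Pj mul0r.
Qed.

Definition E0 (R : numFieldType) : 'M[R]_2 := delta_mx 0 1.
Definition F0 (R : numFieldType) : 'M[R]_2 := delta_mx 1 0.
Definition H0 (R : numFieldType) : 'M[R]_2 := delta_mx 0 0 - delta_mx 1 1.

Lemma trE2 (R : numFieldType) (A : 'M[R]_2) : \tr A = A 0 0 + A 1 1.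
Proof. by rewrite /mxtrace !big_ord_recl big_ord0 addr0; congr (A _ _ + A _ _); apply: val_inj. Qed.

Lemma sl2E (R : numFieldType) : sl2 (E0 R).
Proof. by rewrite /sl2 trE2 !mxE /= addr0. Qed.
Lemma sl2F (R : numFieldType) : sl2 (F0 R).
Proof. by rewrite /sl2 trE2 !mxE /= addr0. Qed.
Lemma sl2H (R : numFieldType) : sl2 (H0 R).
Proof. by rewrite /sl2 trE2 !mxE /= subr0 sub0r subrr. Qed.

Lemma cEF (R : numFieldType) : mxcomm (E0 R) (F0 R) = H0 R.
Proof. by rewrite /mxcomm /E0 /F0 /H0 !mul_delta_mx. Qed.
Lemma cHE (R : numFieldType) : mxcomm (H0 R) (E0 R) = 2%:R *: E0 R.
Proof.
rewrite /mxcomm /E0 /H0 mulmxBl mulmxBr !mul_delta_mx_cond /=.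
rewrite !mulr0n !mulr1n subr0 sub0r opprK scaler_nat mulr2n //.
Qed.
Lemma cHF (R : numFieldType) : mxcomm (H0 R) (F0 R) = -(2%:R *: F0 R).
Proof.
rewrite /mxcomm /F0 /H0 mulmxBl mulmxBr !mul_delta_mx_cond /=.
rewrite !mulr0n !mulr1n subr0 sub0r scaler_nat mulr2n opprD //.
Qed.
Lemma F0neq0 (R : numFieldType) : F0 R != 0.
Proof. by apply/negP => /eqP/matrixP/(_ 1 0); rewrite !mxE /= => /eqP; rewrite oner_eq0. Qed.

Lemma lin0 (R : numFieldType) (U W : lmodType R) (g : U -> W) :
  (forall a x y, g (a *: x + y) = a *: g x + g y) -> g 0 = 0.
Proof.
move=> L; have E : g 0 = g 0 + g 0 by rewrite -{1}(addr0 0) -{1}(scale1r 0) L scale1r.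
have : g 0 + g 0 - g 0 = g 0 - g 0 by rewrite -E.
by rewrite addrK subrr.
Qed.
Lemma linZ (R : numFieldType) (U W : lmodType R) (g : U -> W) :
  (forall a x y, g (a *: x + y) = a *: g x + g y) -> forall a x, g (a *: x) = a *: g x.
Proof. by move=> L a x; rewrite -[a *: x]addr0 L lin0 // addr0. Qed.

Unset Implicit Arguments.
Theorem lemma5p4 (R : rcfType) (V : vectType R) (br : V -> V -> V)
  (n : nat) (rho : V -> 'M[R]_n) (wedge : 'cV[R]_n -> 'cV[R]_n -> 'rV[R]_n) :
  lie_bracket br -> lie_semisimple br ->
  lie_rep br rho -> faithful rho ->
  sym_equiv_wedge rho wedge -> nonvanishing_on_planes wedge ->
  ~ has_sl2sl2_subalgebra br.
Proof.
move=> _ _ [Rlin Rbr] Hfaith [WL WS WE] NV [phi1 [phi2 [L1 L2 Hcomm Hinj]]].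
have p10 : phi1 0 = 0 by apply: lin0 L1.
have p20 : phi2 0 = 0 by apply: lin0 L2.
have r0 : rho 0 = 0 by apply: lin0 Rlin.
have c00 : mxcomm (0 : 'M[R]_2) 0 = 0 by rewrite /mxcomm mul0mx subrr.
have sl20 : sl2 (0 : 'M[R]_2) by rewrite /sl2 mxtrace0.
set G1 := fun A => rho (phi1 A); set G2 := fun A => rho (phi2 A).
have G1Z : forall (a : R) A, G1 (a *: A) = a *: G1 A.
  by move=> a A; rewrite /G1 (linZ L1) (linZ Rlin).
have G2Z : forall (a : R) A, G2 (a *: A) = a *: G2 A.
  by move=> a A; rewrite /G2 (linZ L2) (linZ Rlin).
have G1N : forall A, G1 (- A) = - G1 A by move=> A; rewrite -scaleN1r G1Z scaleN1r.
have G2N : forall A, G2 (- A) = - G2 A by move=> A; rewrite -scaleN1r G2Z scaleN1r.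
have G1c : forall A B, sl2 A -> sl2 B -> G1 (mxcomm A B) = rho (phi1 A) *m rho (phi1 B) - rho (phi1 B) *m rho (phi1 A).
  move=> A B sA sB; have := Hcomm A B 0 0 sA sB sl20 sl20.
  by rewrite c00 p20 !addr0 /G1 => ->; rewrite Rbr.
have G2c : forall A B, sl2 A -> sl2 B -> G2 (mxcomm A B) = rho (phi2 A) *m rho (phi2 B) - rho (phi2 B) *m rho (phi2 A).
  move=> A B sA sB; have := Hcomm 0 0 A B sl20 sl20 sA sB.
  by rewrite c00 p10 !add0r /G2 => ->; rewrite Rbr.
have G12 : forall A C, sl2 A -> sl2 C -> rho (phi1 A) *m rho (phi2 C) = rho (phi2 C) *m rho (phi1 A).
  move=> A C sA sC; have := Hcomm A 0 0 C sA sl20 sl20 sC.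
  rewrite /mxcomm !mulmx0 !mul0mx subrr p10 p20 !addr0 !add0r => /esym E.
  by apply/eqP; rewrite -subr_eq0 -Rbr E r0.
have G1inj : forall A, sl2 A -> G1 A = 0 -> A = 0.
  move=> A sA H; have pA : phi1 A = 0 by apply: Hfaith; rewrite r0; exact: H.
  have H2 : phi1 A + phi2 0 = 0 by rewrite pA p20 addr0.
  by have [] := Hinj A 0 sA sl20 H2.
have G2inj : forall A, sl2 A -> G2 A = 0 -> A = 0.
  move=> A sA H; have pA : phi2 A = 0 by apply: Hfaith; rewrite r0; exact: H.
  have H2 : phi1 0 + phi2 A = 0 by rewrite pA p10 addr0.
  by have [] := Hinj 0 A sl20 sA H2.
destruct n as [|n].
  have := F0neq0 R; rewrite (G1inj _ (sl2F R)) ?eqxx //.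
  by apply/matrixP => [[]].
have T1 : trip (G1 (E0 R)) (G1 (H0 R)) (G1 (F0 R)).
  split.
  - by rewrite -G1Z -cHE G1c ?sl2H ?sl2E.
  - by rewrite -G1Z -G1N -cHF G1c ?sl2H ?sl2F.
  - by rewrite -cEF G1c ?sl2E ?sl2F.
have T2 : trip (G2 (E0 R)) (G2 (H0 R)) (G2 (F0 R)).
  split.
  - by rewrite -G2Z -cHE G2c ?sl2H ?sl2E.
  - by rewrite -G2Z -G2N -cHF G2c ?sl2H ?sl2F.
  - by rewrite -cEF G2c ?sl2E ?sl2F.
have B : wbil wedge by split.
have Eq1 : forall A, eqv wedge (G1 A) by move=> A a b; exact: WE.
have Eq2 : forall A, eqv wedge (G2 A) by move=> A a b; exact: WE.
have C12 : forall A C, sl2 A -> sl2 C -> G1 A * G2 C = G2 C * G1 A.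
  by move=> A C sA sC; apply: G12.
have f10 : G1 (F0 R) != 0.
  by apply/negP => /eqP /(G1inj _ (sl2F R)) /eqP; rewrite (negbTE (F0neq0 R)).
have f20 : G2 (F0 R) != 0.
  by apply/negP => /eqP /(G2inj _ (sl2F R)) /eqP; rewrite (negbTE (F0neq0 R)).
set e1 := G1 (E0 R); set h1 := G1 (H0 R); set f1 := G1 (F0 R).
set e2 := G2 (E0 R); set h2 := G2 (H0 R); set f2 := G2 (F0 R).
have [d1 [d10 fd1 fd10 ed1]] := trip_facts T1 f10.
have [d2 [d20 fd2 fd20 ed2]] := trip_facts T2 f20.
set P1 := f1 ^+ d1; set P2 := f2 ^+ d2.
have V1 : forall v v', wedge (P1 *m v) (P1 *m v') = 0.
  exact: (vanish B T1 (Eq1 _) (Eq1 _) fd1 ed1 d10).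
have V2 : forall v v', wedge (P2 *m v) (P2 *m v') = 0.
  exact: (vanish B T2 (Eq2 _) (Eq2 _) fd2 ed2 d20).
have [v1 a10] := mx_neq0 fd10.
have [v2 a20] := mx_neq0 fd20.
set a1 := P1 *m v1; set a2 := P2 *m v2.
have R1 : forall v, exists c, P1 *m v = c *: a1.
  move=> v; case: (boolP (free [:: P1 *m v; a1])) => Hf.
    by case: (plane B NV Hf (V1 _ _) (V1 _ _) (V1 _ _)).
  move: Hf; rewrite free_cons seq1_free a10 andbT span_seq1 negbK.
  by move/vlineP.
have R2 : forall v, exists c, P2 *m v = c *: a2.
  move=> v; case: (boolP (free [:: P2 *m v; a2])) => Hf.
    by case: (plane B NV Hf (V2 _ _) (V2 _ _) (V2 _ _)).
  move: Hf; rewrite free_cons seq1_free a20 andbT span_seq1 negbK.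
  by move/vlineP.
have cP1 : forall A, sl2 A -> G2 A * P1 = P1 * G2 A.
  move=> A sA; rewrite /P1; apply: commrX; rewrite /GRing.comm.
  by apply/esym/C12; [exact: sl2F|].
have cP2 : forall A, sl2 A -> G1 A * P2 = P2 * G1 A.
  move=> A sA; rewrite /P2; apply: commrX; rewrite /GRing.comm.
  by apply: C12; [|exact: sl2F].
have e2P1 : e2 * P1 = 0 by apply: (scal (cP1 _ (sl2E R)) ed2 (erefl a1) a10 R1).
have f2P1 : f2 * P1 = 0 by apply: (scal (cP1 _ (sl2F R)) fd2 (erefl a1) a10 R1).
have f1P2 : f1 * P2 = 0 by apply: (scal (cP2 _ (sl2F R)) fd1 (erefl a2) a20 R2).
have h2P1 : h2 * P1 = 0.
  have [_ _ H3] := T2; rewrite -/e2 -/h2 -/f2 in H3.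
  by rewrite -H3 mulrBl -!mulrA e2P1 f2P1 !mulr0 subrr.
have h2a1 : h2 *m a1 = 0 by rewrite /a1 -mulmxRA h2P1 mul0mx.
have h2a2 : h2 *m a2 = - (d2%:R *: a2).
  by rewrite /a2 -mulmxRA (trip_top T2 fd2) mulNmx scalemxAl.
have f1a2 : f1 *m a2 = 0 by rewrite /a2 -mulmxRA f1P2 mul0mx.
have Hfree : free [:: a1; a2].
  rewrite free_cons seq1_free a20 andbT span_seq1; apply/negP => /vlineP [c Hc].
  move: h2a1; rewrite Hc -scalemxAr h2a2 scalerN => /eqP; rewrite oppr_eq0.
  rewrite scalerA scaler_eq0 (negbTE a20) orbF mulf_eq0 pnatr_eq0 -[d2 == 0%N]negbK -lt0n d20 orbF => /eqP c0.
  by move: a10; rewrite -/a1 Hc c0 scale0r eqxx.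
have W12 : wedge a1 a2 = 0.
  have wh : wedge a1 a2 *m h2 = d2%:R *: wedge a1 a2.
    apply: oppr_inj; rewrite (Eq2 (H0 R)) -/h2 h2a1 h2a2 w0l // add0r wNr // wZr //.
  have wk := wkill B (Eq1 (F0 R)) f1a2 d1 v1.
  rewrite -/P1 -/a1 in wk.
  have wh0 : wedge a1 a2 *m h2 = 0.
    by rewrite wk -scalemxAl -mulmxA mulmxE -(cP1 _ (sl2H R)) -/h2 h2P1 mulmx0 scaler0.
  move: wh; rewrite wh0 => /esym/eqP; rewrite scaler_eq0 pnatr_eq0 -[d2 == 0%N]negbK -lt0n d20 /=.
  by move/eqP.
by apply: (plane B NV Hfree (V1 _ _) W12 (V2 _ _)).
Qed.
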